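(* Let $\mathbf a=(a_0,a_1,a_2,\dots)$ be a sequence of natural numbers with $a_j>1$, and assume the $\mathbf a$-adic solenoid $\Sigma_{\mathbf a}$ contains an element of order $2$. Let $\alpha$ be a random variable with a Bernoulli distribution taking the values $0$ and $1$ with probability $\frac12$ each. Then there exist independent identically distributed random variables $\xi_1,\xi_2,\xi_3$ with values in $\Sigma_{\mathbf a}$ and a symmetric distribution $\mu$ with nowhere vanishing characteristic function, such that $\alpha$ is independent of $(\xi_1,\xi_2,\xi_3)$, the linear forms $2\xi_1$ and $\xi_1+\xi_2+2\alpha\xi_3$ are identically distributed, and $\mu$ cannot be represented as $\mu=\tau(M)$ with $\tau:\mathbb R\to\Sigma_{\mathbf a}$ a continuous monomorphism and $M$ a hyperbolic secant distribution on $\mathbb R$.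
   Context: The $\mathbf a$-adic solenoid: let $\Delta_{\mathbf a}$ be the compact group of $\mathbf a$-adic integers (as a set $\prod_{n\ge0}\{0,1,\dots,a_n-1\}$, with addition with carries determined by $\mathbf a$), let $u=(1,0,0,\dots)\in\Delta_{\mathbf a}$, and let $B=\{(n,nu):n\in\mathbb Z\}$; then $\Sigma_{\mathbf a}=(\mathbb R\times\Delta_{\mathbf a})/B$, a compact connected Abelian group with character group $H_{\mathbf a}=\{m/(a_0\cdots a_n): n\ge0, m\in\mathbb Z\}$. The characteristic function of $\mu$ is $\hat\mu(y)=\int (x,y)\,d\mu(x)$, $y\in H_{\mathbf a}$. A distribution is symmetric if $\mu(B)=\mu(-B)$ for all Borel $B$. A hyperbolic secant distribution on $\mathbb R$ is one with characteristic function $\frac{2}{e^{\sigma s}+e^{-\sigma s}}$ for some real $\sigma$ ($\sigma=0$ allowed). $\tau(M)(E)=M(\tau^{-1}(E))$. *)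

(* Defs.v *)
From HB Require Import structures.
From mathcomp Require Import all_boot all_order all_algebra.
From mathcomp Require Import all_classical all_reals all_analysis.

Set Implicit Arguments.
Unset Strict Implicit.
Unset Printing Implicit Defensive.

Import Order.TTheory GRing.Theory Num.Theory.
Import numFieldNormedType.Exports.

Local Open Scope classical_set_scope.
Local Open Scope ring_scope.

Record aseq := ASeq { aval :> nat -> nat ; aval_gt1 : forall n, (1 < aval n)%N }.

Section Solenoid.
Variables (R : realType) (a : aseq).

(* An element of Delta_a is a digit sequence d with 0 <= d n < a n.      *)
Definition validD (d : nat -> nat) : Prop := forall n, (d n < a n)%N.

Fixpoint carry (x y : nat -> nat) (n : nat) : nat :=
  match n with
  | 0 => 0
  | k.+1 => ((x k + y k + carry x y k) %/ a k)%N
  end.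

Definition dadd (x y : nat -> nat) : nat -> nat :=
  fun n => ((x n + y n + carry x y n) %% a n)%N.

Definition dzero : nat -> nat := fun _ => 0%N.

Definition du : nat -> nat := fun n => if n == 0%N then 1%N else 0%N.

Definition dnat (k : nat) : nat -> nat := iter k (dadd du) dzero.

Lemma dadd_valid x y : validD (dadd x y).
Proof. by move=> n; rewrite /dadd ltn_pmod // (ltn_trans _ (aval_gt1 a n)). Qed.

Lemma dzero_valid : validD dzero.
Proof. by move=> n; rewrite /dzero (ltn_trans _ (aval_gt1 a n)). Qed.

Definition pt := (R * (nat -> nat))%type.

Definition padd (p q : pt) : pt := (p.1 + q.1, dadd p.2 q.2).

Definition bvec (k : nat) : pt := ((k%:R : R), dnat k).

(* p - q lies in B  <->  p + (m, m u) = q + (k, k u) for some m, k : nat *)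
Definition Brel (p q : pt) : Prop :=
  exists m k : nat, padd p (bvec m) = padd q (bvec k).

Definition cls (p : pt) : set pt := [set q | validD q.2 /\ Brel p q].

Definition Sig : Type := {S : set pt | exists p : pt, validD p.2 /\ S = cls p}.

HB.instance Definition _ := gen_eqMixin Sig.
HB.instance Definition _ := gen_choiceMixin Sig.

Definition mkS (p : pt) (hp : validD p.2) : Sig :=
  exist _ (cls p) (ex_intro _ p (conj hp erefl)).

Definition repS (x : Sig) : pt := proj1_sig (cid (proj2_sig x)).

Definition Szero : Sig := @mkS ((0 : R), dzero) dzero_valid.

HB.instance Definition _ := isPointed.Build Sig Szero.

Definition Sadd (x y : Sig) : Sig :=
  @mkS (padd (repS x) (repS y)) (dadd_valid (repS x).2 (repS y).2).

Definition Snmul (k : nat) (x : Sig) : Sig := iter k (Sadd x) Szero.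

Definition Sopp_set (E : set Sig) : set Sig :=
  [set x | exists b, E b /\ Sadd x b = Szero].

(* product topology of R x prod_n {0,...,a_n - 1}, restricted to R x Delta_a *)
Definition open_pt (U : set pt) : Prop :=
  forall p, U p -> validD p.2 ->
    exists e : R, 0 < e /\ exists N : nat, forall q : pt, validD q.2 ->
      `|q.1 - p.1| < e -> (forall i, (i < N)%N -> q.2 i = p.2 i) -> U q.

Definition Sopen (V : set Sig) : Prop :=
  open_pt [set p | exists hp : validD p.2, V (mkS hp)].

Definition SigB := g_sigma_algebraType Sopen.

Definition Pn (n : nat) : nat := (\prod_(i < n.+1) a i)%N.
Definition Nn (n : nat) (d : nat -> nat) : nat :=
  (\sum_(i < n.+1) d i * \prod_(j < i) a j)%N.

(* the character of Sigma_a corresponding to y = m / (a_0 ... a_n) in H_a: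
   (x, y) = exp (2 pi i * phase n m x) *)
Definition phase (n : nat) (m : int) (x : Sig) : R :=
  let p := repS x in
  m%:~R * (p.1 - (Nn n p.2)%:R) / (Pn n)%:R.

Definition charRe (mu : probability SigB R) (n : nat) (m : int) : \bar R :=
  (\int[mu]_x (cos (2 * pi * phase n m x))%:E)%E.
Definition charIm (mu : probability SigB R) (n : nat) (m : int) : \bar R :=
  (\int[mu]_x (sin (2 * pi * phase n m x))%:E)%E.

Definition nowhere_vanishing_char (mu : probability SigB R) : Prop :=
  forall (n : nat) (m : int), ~ (charRe mu n m = 0%E /\ charIm mu n m = 0%E).

Definition symmetric_distr (mu : probability SigB R) : Prop :=
  forall E : set SigB, measurable E -> mu E = mu (Sopp_set E).

Definition hyperbolic_secant (M : probability R R) : Prop :=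
  exists sigma : R, forall s : R,
    (\int[M]_x (cos (s * x))%:E)%E = (2 / (expR (sigma * s) + expR (- (sigma * s))))%:E
    /\ (\int[M]_x (sin (s * x))%:E)%E = 0%E.

Definition continuous_monomorphism (tau : R -> Sig) : Prop :=
  (forall s t, tau (s + t) = Sadd (tau s) (tau t)) /\ injective tau /\
  (forall V : set Sig, Sopen V -> open (tau @^-1` V)).

Definition image_distr (tau : R -> Sig) (M : probability R R) (mu : probability SigB R) :
  Prop := forall E : set SigB, measurable E -> mu E = M (tau @^-1` E).

End Solenoid.

(* Main.v *)
Require Import Defs.
From HB Require Import structures.
From mathcomp Require Import all_boot all_order all_algebra.
From mathcomp Require Import all_classical all_reals all_analysis.
From mathcomp Require Import zify lra.
Import Order.TTheory GRing.Theory Num.Theory.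
Import numFieldNormedType.Exports.
Local Open Scope classical_set_scope.
Local Open Scope ring_scope.
Set Implicit Arguments.
Unset Strict Implicit.

Section Alg.
Variables (R : realType) (a : aseq).

Lemma a_gt0 n : (0 < a n)%N.
Proof. exact: ltn_trans (aval_gt1 a n). Qed.

Lemma Pn_gt0 n : (0 < Pn a n)%N.
Proof. by rewrite /Pn prodn_gt0 // => i; exact: a_gt0. Qed.

Lemma Pn0 : Pn a 0 = a 0.
Proof. by rewrite /Pn big_ord1. Qed.

Lemma PnS n : Pn a n.+1 = (Pn a n * a n.+1)%N.
Proof. by rewrite /Pn big_ord_recr. Qed.

Lemma Nn0 d : Nn a 0 d = d 0%N.
Proof. by rewrite /Nn big_ord1 big_ord0 muln1. Qed.

Lemma NnS n d : Nn a n.+1 d = (Nn a n d + d n.+1 * Pn a n)%N.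
Proof. by rewrite /Nn big_ord_recr. Qed.

Lemma Nn_lt d n : validD a d -> (Nn a n d < Pn a n)%N.
Proof.
move=> hd; elim: n => [|n IH]; first by rewrite Nn0 Pn0.
rewrite NnS PnS.
have h1 := hd n.+1.
have h2 : (Nn a n d + d n.+1 * Pn a n < (d n.+1).+1 * Pn a n)%N.
  by rewrite mulSn; lia.
apply: (leq_trans h2); rewrite mulnC leq_mul2l h1 orbT //.
Qed.

Lemma Nn_dadd_aux x y n :
  (Nn a n x + Nn a n y = Nn a n (Defs.dadd a x y) + carry a x y n.+1 * Pn a n)%N.
Proof.
elim: n => [|n IH].
  by rewrite !Nn0 Pn0 /Defs.dadd /= addn0 [in RHS]addnC -divn_eq.
rewrite !NnS PnS.
have -> : (Nn a n x + x n.+1 * Pn a n + (Nn a n y + y n.+1 * Pn a n)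
   = (Nn a n x + Nn a n y) + (x n.+1 + y n.+1) * Pn a n)%N by lia.
rewrite IH -addnA -mulnDl.
have -> : carry a x y n.+2 = ((x n.+1 + y n.+1 + carry a x y n.+1) %/ a n.+1)%N by [].
have -> : Defs.dadd a x y n.+1 = ((x n.+1 + y n.+1 + carry a x y n.+1) %% a n.+1)%N by [].
set s := (x n.+1 + y n.+1 + carry a x y n.+1)%N.
have hs := divn_eq s (aval a n.+1).
have -> : (carry a x y n.+1 + (x n.+1 + y n.+1) = s)%N by rewrite /s; lia.
rewrite [in LHS]hs mulnDl -addnA; congr (_ + _)%N; rewrite addnC; congr (_ + _)%N.
by rewrite (mulnC (Pn a n)) mulnA.
Qed.


Lemma Nn_dadd x y n :
  Nn a n (Defs.dadd a x y) = ((Nn a n x + Nn a n y) %% Pn a n)%N.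
Proof.
rewrite Nn_dadd_aux addnC modnMDl modn_small //; apply: Nn_lt; exact: dadd_valid.
Qed.

Lemma Nn_dzero n : Nn a n Defs.dzero = 0%N.
Proof. by rewrite /Nn big1. Qed.

Lemma Nn_du n : Nn a n Defs.du = 1%N.
Proof.
elim: n => [|n IH]; first by rewrite Nn0.
by rewrite NnS IH.
Qed.

Lemma Nn_dnat k n : Nn a n (Defs.dnat a k) = (k %% Pn a n)%N.
Proof.
elim: k => [|k IH]; first by rewrite mod0n /Defs.dnat /= Nn_dzero.
rewrite /Defs.dnat iterS -/(Defs.dnat a k) Nn_dadd IH Nn_du modnDmr.
by rewrite add1n.
Qed.

Lemma digits_eq x y : validD a x -> validD a y ->
  (forall n, Nn a n x = Nn a n y) -> x = y.
Proof.
move=> hx hy h; apply: funext => n; case: n => [|n].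
  by have := h 0%N; rewrite !Nn0.
have := h n.+1; rewrite !NnS (h n) => /eqP.
by rewrite eqn_add2l eqn_pmul2r ?Pn_gt0 // => /eqP.
Qed.

Definition Erel (p q : pt R) := exists m k : nat,
  p.1 + m%:R = q.1 + k%:R /\
  forall n, (Nn a n p.2 + m = Nn a n q.2 + k %[mod Pn a n])%N.

Lemma congD (P x y c : nat) : (x = y %[mod P])%N -> (x + c = y + c %[mod P])%N.
Proof. by move=> h; rewrite -modnDml h modnDml. Qed.
Arguments congD {P x y} c.

Lemma Erel_refl p : Erel p p.
Proof. by exists 0%N, 0%N. Qed.

Lemma Erel_sym p q : Erel p q -> Erel q p.
Proof. by move=> [m [k [h1 h2]]]; exists k, m; split => // n; rewrite h2. Qed.

Lemma Erel_trans p q r : Erel p q -> Erel q r -> Erel p r.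
Proof.
move=> [m1 [k1 [h1 h2]]] [m2 [k2 [h3 h4]]]; exists (m1 + m2)%N, (k1 + k2)%N; split.
  rewrite !natrD; lra.
move=> n; rewrite addnA (congD m2 (h2 n)) -addnA (addnC k1) addnA (congD k1 (h4 n)).
by rewrite -addnA (addnC k2).
Qed.

Lemma Brel_Erel p q : Brel a p q <-> Erel p q.
Proof.
split.
  move=> [m [k h]]; exists m, k; split; first by have := congr1 fst h.
  move=> n; have := congr1 (fun p => Nn a n p.2) h => /=.
  by rewrite !Nn_dadd !Nn_dnat !modnDmr.
move=> [m [k [h1 h2]]]; exists m, k; rewrite /padd /bvec /=.
congr (_, _) => //; apply: digits_eq; try exact: dadd_valid.
by move=> n; rewrite !Nn_dadd !Nn_dnat !modnDmr h2.
Qed.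

Lemma cls_eq p q : validD a q.2 -> (cls a p = cls a q <-> Erel p q).
Proof.
move=> hq; split.
  move=> e; have : cls a q q by split => //; apply/Brel_Erel/Erel_refl.
  by rewrite -e => -[_ /Brel_Erel].
move=> h; apply/funext => r; apply/propext; split => -[hr /Brel_Erel hb]; split => //;
  apply/Brel_Erel.
  exact: Erel_trans (Erel_sym h) hb.
exact: Erel_trans h hb.
Qed.

Lemma repS_spec (x : Sig R a) : validD a (repS x).2 /\ proj1_sig x = cls a (repS x).
Proof. by rewrite /repS; case: cid => p [hp e]. Qed.

Lemma Sig_ext (x y : Sig R a) : Erel (repS x) (repS y) -> x = y.
Proof.
move=> h.
have e : proj1_sig x = proj1_sig y.
  have [hx ->] := repS_spec x; have [hy ->] := repS_spec y.
  by apply/cls_eq.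
move: x y e {h} => [X hX] [Y hY] /= e; subst Y; congr exist; exact: Prop_irrelevance.
Qed.

Lemma Erel_mkS p (hp : validD a p.2) : Erel p (repS (mkS hp)).
Proof.
have [hv e] := repS_spec (mkS hp).
by apply/(cls_eq _ hv); rewrite -e.
Qed.

Lemma Erel_padd p p' q q' : Erel p p' -> Erel q q' -> Erel (padd a p q) (padd a p' q').
Proof.
move=> [m1 [k1 [h1 h2]]] [m2 [k2 [h3 h4]]]; exists (m1 + m2)%N, (k1 + k2)%N; split.
  rewrite /padd /= !natrD; lra.
move=> n; rewrite /padd /= !Nn_dadd !modnDml.
have -> : (Nn a n p.2 + Nn a n q.2 + (m1 + m2) = (Nn a n p.2 + m1) + (Nn a n q.2 + m2))%N by lia.
have -> : (Nn a n p'.2 + Nn a n q'.2 + (k1 + k2) = (Nn a n p'.2 + k1) + (Nn a n q'.2 + k2))%N by lia.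
by rewrite -modnDm h2 h4 modnDm.
Qed.


Lemma Erel_zero : Erel ((0 : R), Defs.dzero) (repS (Szero R a)).
Proof. exact: Erel_mkS. Qed.

Lemma Erel_Sadd (x y : Sig R a) : Erel (padd a (repS x) (repS y)) (repS (Sadd x y)).
Proof. exact: Erel_mkS. Qed.

Lemma mkS_eq p (hp : validD a p.2) (x : Sig R a) : mkS hp = x <-> Erel p (repS x).
Proof.
split; first by move=> <-; exact: Erel_mkS.
by move=> h; apply: Sig_ext; apply: Erel_trans (Erel_sym (Erel_mkS hp)) h.
Qed.

Lemma Sadd0 (x : Sig R a) : Sadd x (Szero R a) = x.
Proof.
apply: Sig_ext; apply: Erel_trans (Erel_sym (Erel_Sadd x (Szero R a))) _.
apply: Erel_trans (Erel_padd (Erel_refl (repS x)) (Erel_sym Erel_zero)) _.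
exists 0%N, 0%N; split; first by rewrite /padd /=; lra.
by move=> n; rewrite /padd /= Nn_dadd Nn_dzero !addn0 modn_mod.
Qed.

Lemma Sadd_cancel (y : Sig R a) : Sadd y y = y -> y = Szero R a.
Proof.
move=> e; apply: Sig_ext; apply: Erel_trans _ Erel_zero.
have := Erel_Sadd y y; rewrite e => -[m [k [h1 h2]]].
exists m, k; split; first by move: h1; rewrite /padd /=; lra.
move=> n; move: (h2 n); rewrite /padd /= Nn_dadd Nn_dzero modnDml -addnA => /eqP.
by rewrite eqn_modDl => /eqP.
Qed.

Lemma inv_unique (x b : Sig R a) :
  Sadd x x = Szero R a -> Sadd x b = Szero R a -> b = x.
Proof.
move=> e1 e2.
have H1 : Erel (padd a (repS x) (repS x)) ((0 : R), Defs.dzero).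
  by apply: Erel_trans (Erel_Sadd x x) _; rewrite e1; exact: Erel_sym Erel_zero.
have H2 : Erel (padd a (repS x) (repS b)) ((0 : R), Defs.dzero).
  by apply: Erel_trans (Erel_Sadd x b) _; rewrite e2; exact: Erel_sym Erel_zero.
apply: Sig_ext.
move: H1 H2 => [m' [k' [h1 h2]]] [m [k [h3 h4]]].
exists (k' + m)%N, (k + m')%N; split.
  move: h1 h3; rewrite /padd /= !natrD; lra.
move=> n; move: (h2 n) (h4 n); rewrite /padd /= !Nn_dadd Nn_dzero !modnDml => g1 g2.
apply/eqP; rewrite -(eqn_modDl (Nn a n (repS x).2)); apply/eqP.
set A := Nn a n (repS x).2; set B := Nn a n (repS b).2.
have -> : (A + (B + (k' + m)) = (A + B + m) + k')%N by lia.
have -> : (A + (A + (k + m')) = (A + A + m') + k)%N by lia.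
rewrite (congD k' g2) (congD k g1); congr (_ %% _)%N; lia.
Qed.


Lemma Nn_agree x y n : (forall i, (i < n.+1)%N -> x i = y i) -> Nn a n x = Nn a n y.
Proof. by move=> h; rewrite /Nn; apply: eq_bigr => i _; rewrite h. Qed.

Lemma closed1 (x0 : Sig R a) : Sopen (~` [set x0]).
Proof.
rewrite /Sopen /open_pt => p [hp hne] _.
set r := repS x0.
have nE : ~ Erel p r by move=> h; apply: hne; apply/mkS_eq.
have key : forall q (hq : validD a q.2), Erel q r ->
    exists m k : nat, q.1 + m%:R = r.1 + k%:R /\
      forall n, (Nn a n q.2 + m = Nn a n r.2 + k %[mod Pn a n])%N by [].
case: (pselect (exists m0 k0 : nat, p.1 + m0%:R = r.1 + k0%:R)).
  move=> [m0 [k0 e0]].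
  have : ~ (forall n, (Nn a n p.2 + m0 = Nn a n r.2 + k0 %[mod Pn a n])%N).
    by move=> H; apply: nE; exists m0, k0.
  move=> /existsNP [n0 hn0].
  exists (1/2); split; first lra.
  exists n0.+1 => q hq hlt hdig; exists hq => /= /mkS_eq hE.
  have [m [k [h1 h2]]] := hE.
  have eqi : (k + m0 = m + k0)%N.
    have hqp : q.1 - p.1 = (k + m0)%N%:R - (m + k0)%N%:R by rewrite !natrD; lra.
    move: hlt; rewrite hqp ltr_norml => /andP [l1 l2].
    have [AB|AB|AB] := ltngtP (k + m0) (m + k0) => //.
      have : ((((k + m0)%N)%:R + 1 : R) <= (((m + k0)%N)%:R : R)) by rewrite natr1 ler_nat.
      move=> H; exfalso; clear -l1 l2 H; lra.
    have : ((((m + k0)%N)%:R + 1 : R) <= (((k + m0)%N)%:R : R)) by rewrite natr1 ler_nat.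
    move=> H; exfalso; clear -l1 l2 H; lra.
  apply: hn0.
  have hN : Nn a n0 q.2 = Nn a n0 p.2 by apply: Nn_agree.
  have g := h2 n0; rewrite hN in g.
  apply/eqP; rewrite -(eqn_modDl k); apply/eqP.
  have -> : (k + (Nn a n0 p.2 + m0) = (Nn a n0 p.2 + m) + k0)%N by lia.
  have -> : (k + (Nn a n0 r.2 + k0) = (Nn a n0 r.2 + k) + k0)%N by lia.
  exact: congD k0 g.
move=> hni.
set dl := r.1 - p.1.
set z0 := Num.floor dl.
set f := dl - z0%:~R.
have f0 : 0 <= f by rewrite /f subr_ge0 floor_le.
have f1 : f < 1.
  have : dl < (z0 + 1)%:~R by rewrite -floor_lt_int ltzD1.
  rewrite intrD /f; lra.
have fn0 : f != 0.
  apply/eqP => ef; apply: hni.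
  have edl : dl = z0%:~R by move: ef; rewrite /f; lra.
  move: edl; case: (z0) => n; rewrite /dl.
    by move=> e; exists n, 0%N; move: e; rewrite -pmulrn; lra.
  by rewrite NegzE => e; exists 0%N, n.+1; move: e; rewrite mulrNz -pmulrn; lra.
have fp : 0 < f by rewrite lt_neqAle eq_sym fn0 f0.
exists (f * (1 - f)); split; first by apply: mulr_gt0 => //; lra.
exists 0%N => q hq hlt _; exists hq => /= /mkS_eq hE.
have [m [k [h1 _]]] := hE.
set z : int := (z0 + k%:Z - m%:Z)%R.
have hz : q.1 - p.1 = f + z%:~R.
  rewrite /z !intrD intrN -!pmulrn /f /dl; lra.
move: hlt; rewrite hz ltr_norml => /andP [l1 l2].
have ff1 : f * (1 - f) <= f by rewrite ler_piMr //; lra.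
have ff2 : f * (1 - f) <= 1 - f by rewrite ler_piMl //; lra.
case: (leP 0 z) => hz0.
  have : 0 <= z%:~R :> R by rewrite ler0z.
  lra.
have : z <= -1 by lia.
rewrite -(ler_int R) => hz1.
have : (-1 : int)%:~R = -1 :> R by [].
lra.
Qed.

End Alg.

Lemma meas1 (R : realType) (a : aseq) (x0 : SigB R a) : measurable [set x0].
Proof.
have h : measurable (~` [set x0] : set (SigB R a)).
  by apply: sub_sigma_algebra; exact: closed1.
by rewrite -[X in measurable X]setCK; apply: measurableC.
Qed.

Section IntDirac.
Local Open Scope ereal_scope.
Import HBNNSimple.

Lemma int_dirac_nn d (T : measurableType d) (R : realType) (x0 : T)
  (m1 : measurable [set x0]) (g : T -> R) (g0 : forall x, (0 <= g x)%R) :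
  \int[\d_x0]_x (g x)%:E = (g x0)%:E.
Proof.
rewrite ge0_integralTE; last by move=> x; rewrite lee_fin.
apply/eqP; rewrite eq_le; apply/andP; split.
  apply: ge_ereal_sup => _ [h hg <-].
  rewrite -integralT_nnsfun integral_dirac //; last first.
    by apply/measurable_realfun.measurable_EFinP; exact: measurable_funPT.
  by rewrite diracE in_setT mul1e; exact: hg.
apply: ereal_sup_ubound => /=; exists (scale_nnsfun (indic_nnsfun R m1) (g0 x0)).
  move=> x /=; rewrite /measurable_realfun.mindic indicE; case: (pselect (x = x0)) => [->|hx].
    by rewrite mem_set // mulr1.
  by rewrite memNset // mulr0 lee_fin.
rewrite -integralT_nnsfun integral_dirac //; last first.
  by apply/measurable_realfun.measurable_EFinP; exact: measurable_funPT.
by rewrite diracE in_setT mul1e /= /measurable_realfun.mindic indicE mem_set // mulr1.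
Qed.

Lemma int_dirac_all d (T : measurableType d) (R : realType) (x0 : T)
  (m1 : measurable [set x0]) (f : T -> R) :
  \int[\d_x0]_x (f x)%:E = (f x0)%:E.
Proof.
rewrite integralE.
have -> : \int[\d_x0]_x ((fun x => (f x)%:E)^\+ x) = \int[\d_x0]_x (Num.max (f x) 0%R)%:E.
  by apply: eq_integral => x _; rewrite funeposE /= EFin_max.
have -> : \int[\d_x0]_x ((fun x => (f x)%:E)^\- x) = \int[\d_x0]_x (Num.max (- f x) 0%R)%:E.
  by apply: eq_integral => x _; rewrite funenegE /= EFin_max.
rewrite !int_dirac_nn // => [|x|x]; try by rewrite le_max lexx orbT.
rewrite -EFinB; congr EFin.
case: (leP 0%R (f x0)) => h.
  by rewrite (max_idPr _) ?subr0 // oppr_le0.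
by rewrite (max_idPl _) ?sub0r ?opprK // oppr_ge0 ltW.
Qed.

End IntDirac.

Unset Implicit Arguments.
Set Strict Implicit.
Definition alphaf (b : bool) : nat := if b then 1%N else 0%N.
Lemma alphaf_meas : measurable_fun setT alphaf.
Proof. by move=> _ Y _. Qed.
HB.instance Definition _ := isMeasurableFun.Build _ _ bool nat alphaf alphaf_meas.

Theorem proposition2p7 (R : realType) (a : aseq) :
  (exists x : Sig R a, x <> Szero R a /\ Sadd x x = Szero R a) ->
  exists (d : measure_display) (T : measurableType d) (P : probability T R)
         (alpha : {mfun T >-> nat}) (xi1 xi2 xi3 : {mfun T >-> SigB R a})
         (mu : probability (SigB R a) R),
    P (alpha @^-1` [set 0%N]) = (1 / 2 : R)%:E /\
    P (alpha @^-1` [set 1%N]) = (1 / 2 : R)%:E /\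
    (forall B1 B2 B3 : set (SigB R a), measurable B1 -> measurable B2 -> measurable B3 ->
       P (xi1 @^-1` B1 `&` xi2 @^-1` B2 `&` xi3 @^-1` B3)
       = (P (xi1 @^-1` B1) * P (xi2 @^-1` B2) * P (xi3 @^-1` B3))%E) /\
    (forall B : set (SigB R a), measurable B ->
       P (xi1 @^-1` B) = mu B /\ P (xi2 @^-1` B) = mu B /\ P (xi3 @^-1` B) = mu B) /\
    (forall (A : set nat) (C : set (SigB R a * SigB R a * SigB R a)), measurable C ->
       P (alpha @^-1` A `&` [set w | C (xi1 w, xi2 w, xi3 w)])
       = (P (alpha @^-1` A) * P [set w | C (xi1 w, xi2 w, xi3 w)])%E) /\
    (forall B : set (SigB R a), measurable B ->
       P [set w | B (Snmul 2 (xi1 w))]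
       = P [set w | B (Sadd (Sadd (xi1 w) (xi2 w)) (Snmul (2 * alpha w) (xi3 w)))]) /\
    symmetric_distr mu /\ nowhere_vanishing_char mu /\
    ~ (exists (tau : R -> Sig R a) (M : probability R R),
         continuous_monomorphism tau /\ hyperbolic_secant M /\ image_distr tau M mu).
Proof.
move=> [x0 [hx0 h2]].
pose P : probability bool R := bernoulli_prob (1 / 2 : R).
pose xi : {mfun bool >-> SigB R a} := cst x0.
pose mu : probability (SigB R a) R := @dirac _ (SigB R a) x0 R.
have hP : forall A, P A = bernoulli_prob (1 / 2 : R) A by [].
have hmu : forall A, mu A = @dirac _ (SigB R a) x0 R A by [].
have hP1 : P setT = 1%E by exact: probability_setT.
have hP0 : P set0 = 0%E by exact: measure0.
have hb : (0 <= (1 / 2 : R) <= 1) by apply/andP; split; lra.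
exists _, bool, P, alphaf, xi, xi, xi, mu.
split.
  have -> : alphaf @^-1` [set 0%N] = [set false] by apply/seteqP; split => -[] //=.
  rewrite hP bernoulli_probE // !diracE memNset // mem_set //=.
  by rewrite mule0 add0e mule1; congr EFin; rewrite /unstable.onem; lra.
split.
  have -> : alphaf @^-1` [set 1%N] = [set true] by apply/seteqP; split => -[] //=.
  rewrite hP bernoulli_probE // !diracE mem_set // memNset //=.
  by rewrite mule0 adde0 mule1.
have hpre : forall B : set (SigB R a), xi @^-1` B = if x0 \in B then setT else set0.
  by move=> B; exact: preimage_cst.
split.
  move=> B1 B2 B3 _ _ _; rewrite !hpre.
  by case: (x0 \in B1); case: (x0 \in B2); case: (x0 \in B3);
    rewrite ?setIT ?setI0 ?set0I ?hP1 ?hP0 ?mule1 ?mule0 ?mul0e.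
split.
  move=> B _; rewrite hpre hmu diracE.
  by case: (x0 \in B); rewrite ?hP1 ?hP0.
split.
  move=> A C _.
  case: (pselect (C (x0, x0, x0))) => hC.
    have -> : [set w | C (xi w, xi w, xi w)] = setT by apply/seteqP; split.
    by rewrite setIT hP1 mule1.
  have -> : [set w | C (xi w, xi w, xi w)] = set0 by apply/seteqP; split.
  by rewrite setI0 hP0 mule0.
have Sz2 : Snmul 2 x0 = Szero R a by rewrite /Snmul /= Sadd0.
have Szz : Sadd (Szero R a) (Szero R a) = Szero R a by exact: Sadd0.
split.
  move=> B _; congr (P _); apply/funext => w.
  have hxi : forall w, xi w = x0 by [].
  have hf : Sadd (Sadd x0 x0) (Snmul (2 * alphaf w) x0) = Szero R a.
    by case: w; rewrite /Snmul /= ?Sadd0 h2 ?Sadd0.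
  change (B (Snmul 2 x0) = B (Sadd (Sadd x0 x0) (Snmul (2 * alphaf w) x0))).
  by rewrite Sz2 hf.
split.
  move=> E _; rewrite !hmu !diracE; congr (_%:R%:E).
  case: (pselect (E x0)) => hE.
    by rewrite !mem_set //; exists x0.
  rewrite !memNset // => -[b [Eb eb]]; apply: hE.
  by rewrite -(inv_unique h2 eb).
split.
  move=> n m [hr hi].
  move: hr hi; rewrite /charRe /charIm /mu !int_dirac_all; try exact: meas1.
  move=> [hr] [hi]; have := cos2Dsin2 (2 * pi * phase n m x0).
  by rewrite hr hi expr0n /= add0r => /eqP; rewrite eq_sym oner_eq0.
move=> [tau [M [[hadd [hinj _]] [_ himg]]]].
have := himg [set x0] (meas1 x0).
have -> : tau @^-1` [set x0] = set0.
  apply/seteqP; split => // t /= ht.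
  have t0 : tau 0 = Szero R a by apply: Sadd_cancel; rewrite -hadd addr0.
  have : tau (t + t) = tau 0 by rewrite hadd ht h2 t0.
  move=> /hinj tt0; have t00 : t = 0 by lra.
  by apply: hx0; rewrite -ht t00 t0.
rewrite measure0 hmu diracE mem_set //= => /eqP; rewrite eqe oner_eq0.
by [].
Qed.
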